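(* Let $p>3$ be a prime, let $G=\mathbb{Z}/p\mathbb{Z}$, and let $U=u_1u_2u_3$ and $V=v_1v_2v_3$ be sequences over $G$ each consisting of three distinct elements. Let $U\cdot V=\{\sum_{i=1}^3 u_i v_{\sigma(i)} : \sigma \text{ a permutation of } \{1,2,3\}\}\subseteq G$. Then $|U\cdot V|\geq 4$. Furthermore, if $p>7$ and $|U\cdot V|=4$, then $U\cdot V$ is not an arithmetic progression, and either both $\{u_1,u_2,u_3\}$ and $\{v_1,v_2,v_3\}$ are arithmetic progressions, or else there exist affine transformations $\varphi,\psi$ of $G$ (maps $z\mapsto \alpha z+\beta$ with $\alpha,\beta\in G$, $\alpha\neq 0$) such that $\varphi(\{u_1,u_2,u_3\})=\{0,1,x\}$ and $\psi(\{v_1,v_2,v_3\})=\{0,1,y\}$, where $x$ and $y$ are the two distinct roots of $z^2-z+1$ in $\mathbb{Z}/p\mathbb{Z}$.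
   Context: A subset $A\subseteq \mathbb{Z}/p\mathbb{Z}$ is an arithmetic progression if $A=\{a,a+d,\ldots,a+(k-1)d\}$ for some $a\in \mathbb{Z}/p\mathbb{Z}$, some nonzero $d$ (the difference), and $k=|A|$. Multiplication is that of the ring $\mathbb{Z}/p\mathbb{Z}$. *)

(* Defs.v *)
From mathcomp Require Import all_boot all_order all_algebra all_fingroup.
Set Implicit Arguments. Unset Strict Implicit. Unset Printing Implicit Defensive.
Import GRing.Theory.
Local Open Scope ring_scope.

Definition prodset (R : finNzRingType) (u v : 'I_3 -> R) : {set R} :=
  [set \sum_(i < 3) u i * v (s i) | s : 'S_3].

Definition is_AP (R : finNzRingType) (A : {set R}) : Prop :=
  exists a d : R, d != 0 /\ A = [set a + (val i)%:R * d | i : 'I_#|A|].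

Definition affine_image (R : finNzRingType) (alpha beta : R) (A : {set R}) : {set R} :=
  [set alpha * z + beta | z in A].

(* Main.v *)
Require Import Defs.
From mathcomp Require Import all_boot all_order all_algebra all_fingroup.
From mathcomp Require Import ring zify.
Import GRing.Theory.
Local Open Scope ring_scope.

Definition o0 : 'I_3 := @Ordinal 3 0 isT.
Definition o1 : 'I_3 := @Ordinal 3 1 isT.
Definition o2 : 'I_3 := @Ordinal 3 2 isT.

Lemma ord3 (i : 'I_3) : [\/ i = o0, i = o1 | i = o2].
Proof.
case: i => [[|[|[|//]]] H]; [apply: Or31|apply: Or32|apply: Or33]; exact: val_inj.
Qed.

Lemma sum3 (R : nmodType) (F : 'I_3 -> R) : \sum_(i < 3) F i = F o0 + F o1 + F o2.
Proof.
rewrite !big_ord_recl big_ord0 addr0 addrA.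
by congr (F _ + F _ + F _); apply: val_inj.
Qed.

Lemma set3 (T : finType) (f : 'I_3 -> T) : [set f i | i : 'I_3] = [set f o0; f o1; f o2].
Proof.
apply/setP => z; rewrite !inE; apply/imsetP/idP.
  by case=> i _ ->; case: (ord3 i) => ->; rewrite eqxx ?orbT.
by rewrite -!orbA => /or3P[] /eqP ->; eexists.
Qed.

Section Gen.
Variable R : finNzRingType.

Definition E6 (a0 a1 a2 b0 b1 b2 : R) : {set R} :=
  [set a0*b0 + a1*b1 + a2*b2; a0*b1 + a1*b0 + a2*b2; a0*b2 + a1*b1 + a2*b0;
       a0*b0 + a1*b2 + a2*b1; a0*b1 + a1*b2 + a2*b0; a0*b2 + a1*b0 + a2*b1].

Lemma prodsetE (u v : 'I_3 -> R) :
  prodset u v = E6 (u o0) (u o1) (u o2) (v o0) (v o1) (v o2).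
Proof.
apply/setP => z; rewrite /prodset /E6 !inE; apply/imsetP/idP.
  case=> s _ ->; rewrite sum3.
  have hs := @perm_inj _ s.
  have n01 : s o0 != s o1 by rewrite (inj_eq hs).
  have n02 : s o0 != s o2 by rewrite (inj_eq hs).
  have n12 : s o1 != s o2 by rewrite (inj_eq hs).
  move: n01 n02 n12.
  by case: (ord3 (s o0)) => ->; case: (ord3 (s o1)) => ->; case: (ord3 (s o2)) => -> //;
    rewrite !eqxx ?orbT.
rewrite -!orbA.
case/orP=> [/eqP->|]; first by exists 1%g => //; rewrite sum3 !perm1.
case/orP=> [/eqP->|]; first by exists (tperm o0 o1) => //; rewrite sum3 tpermL tpermR tpermD.
case/orP=> [/eqP->|]; first by exists (tperm o0 o2) => //; rewrite sum3 tpermL tpermR tpermD.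
case/orP=> [/eqP->|]; first by exists (tperm o1 o2) => //; rewrite sum3 tpermL tpermR tpermD.
case/orP=> [/eqP->|/eqP->].
  exists (tperm o0 o1 * tperm o0 o2)%g => //; rewrite sum3 !permM.
  by rewrite [tperm o0 o1 o0]tpermL [tperm o0 o1 o1]tpermR [tperm o0 o1 o2]tpermD // tpermL tpermR tpermD.
exists (tperm o0 o2 * tperm o0 o1)%g => //; rewrite sum3 !permM.
by rewrite [tperm o0 o2 o0]tpermL [tperm o0 o2 o2]tpermR [tperm o0 o2 o1]tpermD // tpermL tpermR tpermD.
Qed.
End Gen.
Arguments E6 {R}.
Section Aff.
Variable F : finFieldType.
Implicit Types (A : {set F}) (a b c d : F).

Lemma affine_comp a b c d A :
  affine_image a b (affine_image c d A) = affine_image (a * c) (a * d + b) A.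
Proof. rewrite /affine_image -imset_comp; apply: eq_imset => z /=; ring. Qed.

Lemma affine_id A : affine_image 1 0 A = A.
Proof.
rewrite /affine_image (eq_imset (g := id)) ?imset_id // => z; ring.
Qed.

Lemma affine_inj a b : a != 0 -> injective (fun z : F => a * z + b).
Proof. by move=> ha z w /addIr /(mulfI ha). Qed.

Lemma card_affine a b A : a != 0 -> #|affine_image a b A| = #|A|.
Proof. by move=> ha; rewrite card_imset //; exact: affine_inj. Qed.

Lemma AP_aff a b A : a != 0 -> is_AP A -> is_AP (affine_image a b A).
Proof.
move=> ha [a0 [d [hd hA]]]; exists (a * a0 + b), (a * d).
split; first by rewrite mulf_neq0.
rewrite card_affine //.
rewrite {1}hA /affine_image -imset_comp; apply: eq_imset => i /=; ring.
Qed.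

Lemma AP_aff_inv a b A : a != 0 -> is_AP (affine_image a b A) -> is_AP A.
Proof.
move=> ha /(@AP_aff a^-1 (- (a^-1 * b)) _ (invr_neq0 ha)).
rewrite affine_comp mulVf // (_ : _ + _ = 0) ?affine_id //; ring.
Qed.

Lemma prodset_ext (u u' v v' : 'I_3 -> F) : u =1 u' -> v =1 v' ->
  prodset u v = prodset u' v'.
Proof.
move=> hu hv; apply: eq_imset => s; apply: eq_bigr => i _; by rewrite hu hv.
Qed.

Lemma prodset_affl a b (u v : 'I_3 -> F) :
  prodset (fun i => a * u i + b) v = affine_image a (b * \sum_i v i) (prodset u v).
Proof.
rewrite /prodset /affine_image -imset_comp; apply: eq_imset => s /=.
have -> : \sum_i v i = \sum_i v (s i) by rewrite (reindex_inj (@perm_inj _ s)).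
rewrite mulr_sumr mulr_sumr -big_split /=.
by apply: eq_bigr => i _; ring.
Qed.

Lemma prodset_affr a b (u v : 'I_3 -> F) :
  prodset u (fun i => a * v i + b) = affine_image a (b * \sum_i u i) (prodset u v).
Proof.
rewrite /prodset /affine_image -imset_comp; apply: eq_imset => s /=.
rewrite mulr_sumr mulr_sumr -big_split /=.
by apply: eq_bigr => i _; ring.
Qed.
End Aff.
Definition smooth (n : nat) : bool :=
  (0 < n)%N && all (fun d => (d %| n)%N ==> has (fun e => (e %| d)%N) (iota 2 (d - 2))) (iota 8 n).

Definition emb {F : nzRingType} (g : F) (t : int * int) : F := t.1%:~R + t.2%:~R * g.

Definition checkL (m : int) (L : seq (int * int)) : bool :=
  all (fun t1 : int * int => all (fun t2 => all (fun t3 => (t1 == t2) ||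
    smooth `|(m * (t1.1 + t3.1 - 2 * t2.1) + (t1.2 + t3.2 - 2 * t2.2))%R|%N) L) L) L.

Definition checkR (L : seq (int * int)) : bool :=
  all (fun t1 : int * int => all (fun t2 => all (fun t3 => (t1 == t2) ||
    let A : int := t1.1 + t3.1 - 2 * t2.1 in let B := t1.2 + t3.2 - 2 * t2.2 in
    smooth `|(A * A + A * B + B * B)%R|%N) L) L) L.

Lemma nosmall p n : prime p -> (7 < p)%N -> (p %| n)%N -> smooth n -> False.
Proof.
move=> hp h7 hd /andP[n0 /allP H].
have hpn : (p <= n)%N by apply: dvdn_leq.
have : p \in iota 8 n by rewrite mem_iota h7 /=; lia.
move/H; rewrite hd /= => /hasP[e]; rewrite mem_iota => /andP[e2 ep] hep.
case/primeP: hp => _ /(_ e hep) /orP[/eqP e1|/eqP ep'].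
  by rewrite e1 in e2.
by move: ep; rewrite ep'; lia.
Qed.

Section Num.
Variable F : finFieldType.
Variable p : nat.
Hypothesis hp : prime p.
Hypothesis hc : p \in [pchar F].

Lemma natF0 n : (n%:R : F) = 0 -> (p %| n)%N.
Proof. by move=> h; rewrite (dvdn_pcharf hc) h. Qed.

Lemma intF0 (z : int) : (z%:~R : F) = 0 -> (p %| `|z|)%N.
Proof.
case: z => n /=; first exact: natF0.
rewrite NegzE mulrNz => /eqP; rewrite oppr_eq0 => /eqP; exact: natF0.
Qed.

Lemma small3 n : (3 < p)%N -> (0 < n)%N -> (n <= 3)%N -> (n%:R : F) = 0 -> False.
Proof.
move=> h3 n0 n3 /natF0 /(dvdn_leq n0) hpn.
by move: (leq_trans h3 (leq_trans hpn n3)); rewrite ltnn.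
Qed.

Lemma AP3 (S : {set F}) : is_AP S -> (3 <= #|S|)%N ->
  exists a d, d != 0 /\ [/\ a \in S, a + d \in S & a + 2%:R * d \in S].
Proof.
move=> [a [d [hd hA]]] h3; exists a, d; split => //.
have h0 : (0 < #|S|)%N by apply: leq_trans h3.
have h1 : (1 < #|S|)%N by apply: leq_trans h3.
have h2 : (2 < #|S|)%N by [].
split; rewrite hA; apply/imsetP.
- by exists (Ordinal h0) => //=; rewrite mul0r addr0.
- by exists (Ordinal h1) => //=; rewrite mul1r.
- by exists (Ordinal h2).
Qed.

Lemma notAP_lin (g : F) (m : int) (L : seq (int * int)) (S : {set F}) :
  m%:~R * g = 1 -> (7 < p)%N -> (3 <= #|S|)%N ->
  (forall z, z \in S -> has (fun t => z == emb g t) L) -> checkL m L ->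
  ~ is_AP S.
Proof.
move=> hg h7 h3 hS hchk /AP3 /(_ h3) [a [d [hd [ha had ha2d]]]].
move: (hS _ ha) (hS _ had) (hS _ ha2d) => /hasP[t1 Lt1 /eqP e1]
  /hasP[t2 Lt2 /eqP e2] /hasP[t3 Lt3 /eqP e3].
have := allP (allP (allP hchk _ Lt1) _ Lt2) _ Lt3 => /orP[/eqP e12|hsm].
  move: hd; rewrite (_ : d = (a + d) - a); last by ring.
  by rewrite e2 e1 e12 subrr eqxx.
move: hsm => /= hsm. apply: (@nosmall p _ hp h7 _ hsm); apply: intF0.
rewrite (_ : _%:~R = m%:~R * (emb g t1 + emb g t3 - 2%:R * emb g t2)
   - (t1.2 + t3.2 - 2 * t2.2)%:~R * (m%:~R * g - 1)); last by rewrite /emb; ring.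
by rewrite hg subrr mulr0 subr0 -e1 -e2 -e3; ring.
Qed.

Lemma notAP_root (x : F) (L : seq (int * int)) (S : {set F}) :
  x * x = x - 1 -> (7 < p)%N -> (3 <= #|S|)%N ->
  (forall z, z \in S -> has (fun t => z == emb x t) L) -> checkR L ->
  ~ is_AP S.
Proof.
move=> hx h7 h3 hS hchk /AP3 /(_ h3) [a [d [hd [ha had ha2d]]]].
move: (hS _ ha) (hS _ had) (hS _ ha2d) => /hasP[t1 Lt1 /eqP e1]
  /hasP[t2 Lt2 /eqP e2] /hasP[t3 Lt3 /eqP e3].
have := allP (allP (allP hchk _ Lt1) _ Lt2) _ Lt3 => /orP[/eqP e12|hsm].
  move: hd; rewrite (_ : d = (a + d) - a); last by ring.
  by rewrite e2 e1 e12 subrr eqxx.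
move: hsm; set A := (t1.1 + t3.1 - 2 * t2.1); set B := (t1.2 + t3.2 - 2 * t2.2) => hsm.
have E0 : (A%:~R + B%:~R * x : F) = 0.
  rewrite (_ : _ + _ = emb x t1 + emb x t3 - 2%:R * emb x t2); last by rewrite /emb /A /B; ring.
  by rewrite -e1 -e2 -e3; ring.
have hA : (A%:~R : F) = - (B%:~R * x) by apply/eqP; rewrite -addr_eq0 E0.
apply: (@nosmall p _ hp h7 _ hsm); apply: intF0.
rewrite (_ : _%:~R = A%:~R * A%:~R + A%:~R * B%:~R + B%:~R * B%:~R); last by ring.
by rewrite hA; ring: hx.
Qed.
End Num.

Lemma dif (F : nzRingType) (a b : F) : a = b -> a - b = 0.
Proof. by move->; rewrite subrr. Qed.

Ltac lc e := apply/eqP; rewrite -subr_eq0; apply/eqP; rewrite (_ : _ - _ = e); last ring.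

Section Core.
Variable F : finFieldType.
Variable p : nat.
Hypothesis hp : prime p.
Hypothesis hc : p \in [pchar F].
Hypothesis h3 : (3 < p)%N.

Lemma three0 : (3%:R : F) = 0 -> False.
Proof. exact: (@small3 F p hc 3 h3). Qed.

Lemma two_neq0 : (2%:R : F) != 0.
Proof. by apply/eqP; apply: (@small3 F p hc 2 h3). Qed.

Lemma half (z : F) : 2%:R * z = 1 -> z = 2%:R^-1.
Proof.
move=> h; apply: (mulfI two_neq0); by rewrite h mulfV // two_neq0.
Qed.

Lemma neq_by (A B P : F) : A - B = P -> P != 0 -> A != B.
Proof. by move=> h hP; rewrite -subr_eq0 h. Qed.

Definition Tset (x y : F) := E6 0 1 x 0 1 y.

Lemma Tmem x y z : (z \in Tset x y) =
  [|| z == 1 + x * y, z == x * y, z == 1, z == y + x, z == y | z == x].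
Proof.
rewrite /Tset /E6 !inE !(mul0r, mulr0, mul1r, mulr1, add0r, addr0) -!orbA //.
Qed.

Ltac solve_or tac := first [ apply/orP; left; apply/eqP; tac | apply/orP; right; solve_or tac ].
Ltac pick tac := rewrite /emb /=; solve_or tac.
Ltac memb tac := move=> z; rewrite Tmem;
  do 5 (case/orP; [move/eqP->; pick tac|]); move/eqP->; pick tac.

Lemma card4 (S : {set F}) a b c d : a \in S -> b \in S -> c \in S -> d \in S ->
  a != b -> a != c -> a != d -> b != c -> b != d -> c != d -> (4 <= #|S|)%N.
Proof.
move=> ha hb hc' hd ab ac ad bc bd cd.
have sub : a |: (b |: (c |: [set d])) \subset S.
  by apply/subsetP => z; rewrite !inE => /or4P[] /eqP ->.
apply: leq_trans (subset_leq_card sub).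
by rewrite !cardsU1 cards1 !inE (negbTE ab) (negbTE ac) (negbTE ad) (negbTE bc) (negbTE bd) (negbTE cd).
Qed.

Lemma card5 (S : {set F}) a b c d e : a \in S -> b \in S -> c \in S -> d \in S -> e \in S ->
  a != b -> a != c -> a != d -> a != e -> b != c -> b != d -> b != e ->
  c != d -> c != e -> d != e -> (5 <= #|S|)%N.
Proof.
move=> ha hb hc' hd he ab ac ad ae bc bd be cd ce de.
have sub : a |: (b |: (c |: (d |: [set e]))) \subset S.
  apply/subsetP => z; rewrite !inE.
  by case/orP=> [/eqP->//|]; case/orP=> [/eqP->//|]; case/orP=> [/eqP->//|]; case/orP=> /eqP->.
apply: leq_trans (subset_leq_card sub).
by rewrite !cardsU1 cards1 !inE (negbTE ab) (negbTE ac) (negbTE ad) (negbTE ae)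
  (negbTE bc) (negbTE bd) (negbTE be) (negbTE cd) (negbTE ce) (negbTE de).
Qed.

Lemma CA (x y : F) : x * y = 1 -> y + x = 1 ->
  [/\ x != y, x != 1 + x * y & y != 1 + x * y].
Proof.
move=> P1 P2.
have hy : y = 1 - x by lc ((y + x) - 1); rewrite (dif _ _ _ P2).
rewrite hy in P1 *.
have hr : x * x - x + 1 = 0 by lc (-(x * (1 - x) - 1)); rewrite (dif _ _ _ P1) oppr0.
split; apply/eqP => q; apply: three0; move/dif: q => q.
- lc (4%:R * (x * x - x + 1) - (x - (1 - x)) * (x - (1 - x))).
  by rewrite hr q; ring.
- lc ((x * x - x + 1) - (3%:R + ((x - (1 + x * (1 - x))) - (x * x - x + 1)))
        * ((x - (1 + x * (1 - x))) - (x * x - x + 1))).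
  by rewrite hr q; ring.
- lc ((x * x - x + 1) - (3%:R + ((1 - x - (1 + x * (1 - x))) - (x * x - x + 1)))
        * ((1 - x - (1 + x * (1 - x))) - (x * x - x + 1))).
  by rewrite hr q; ring.
Qed.

Lemma CB (x y : F) : x = y -> x = 1 + x * y ->
  [/\ x * y != 1, y + x != 1 & x * y != y + x].
Proof.
move=> Q1 Q2; rewrite -Q1 in Q2 *.
have hr : x * x - x + 1 = 0 by lc (-(x - (1 + x * x))); rewrite (dif _ _ _ Q2) oppr0.
split; apply/eqP => q; apply: three0; move/dif: q => q.
- lc ((x * x - x + 1) - (3%:R + ((x * x - 1) - (x * x - x + 1)))
        * ((x * x - 1) - (x * x - x + 1))).
  by rewrite hr q; ring.
- lc (4%:R * (x * x - x + 1) - (x + x - 1) * (x + x - 1)).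
  by rewrite hr q; ring.
- lc ((x * x - x + 1) - (3%:R + ((x * x - (x + x)) - (x * x - x + 1)))
        * ((x * x - (x + x)) - (x * x - x + 1))).
  by rewrite hr q; ring.
Qed.

Definition inAP3' (z : F) := [\/ z = 2%:R, z = -1 | z = 2%:R^-1].

Lemma m1 (z : F) : z != 1 -> (z - 1) * (z + 1) = 0 -> z = -1.
Proof.
move=> h /eqP; rewrite mulf_eq0 subr_eq0 (negbTE h) /= addr_eq0 => /eqP //.
Qed.

Lemma m2 (z : F) : z != 0 -> z * (z - 2%:R) = 0 -> z = 2%:R.
Proof.
by move=> h /eqP; rewrite mulf_eq0 (negbTE h) /= subr_eq0 => /eqP.
Qed.

Lemma caseA (x : F) : x * x = x - 1 -> (7 < p)%N -> (3 <= #|Tset x (1 - x)%R|)%N ->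
  ~ is_AP (Tset x (1 - x)).
Proof.
move=> hx h7 hT.
apply: (@notAP_root F p hp hc x [:: (2,0); (1,0); (1,-1); (0,1)]) => //.
memb ltac:(solve [ring: hx]).
Qed.

Lemma caseB (x : F) : x * x = x - 1 -> (7 < p)%N -> (3 <= #|Tset x x|)%N ->
  ~ is_AP (Tset x x).
Proof.
move=> hx h7 hT.
apply: (@notAP_root F p hp hc x [:: (0,1); (-1,1); (1,0); (0,2)]) => //.
memb ltac:(solve [ring: hx]).
Qed.

Let tw := two_neq0.

Lemma caseC (x y : F) : inAP3' x -> inAP3' y -> (7 < p)%N -> (3 <= #|Tset x y|)%N ->
  ~ is_AP (Tset x y).
Proof.
case=> ->; case=> -> h7 hT.
- apply: (@notAP_lin F p hp hc 1 1 [:: (5,0); (4,0); (1,0); (2,0)]) => //.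
    by ring.
  memb ltac:(solve [ring]).
- apply: (@notAP_lin F p hp hc 1 1 [:: (-1,0); (-2,0); (1,0); (2,0)]) => //.
    by ring.
  memb ltac:(solve [ring]).
- apply: (@notAP_lin F p hp hc (2%:R^-1) 2 [:: (2,0); (1,0); (2,1); (0,1)]) => //.
    by field.
  memb ltac:(solve [ring | field; exact: tw]).
- apply: (@notAP_lin F p hp hc 1 1 [:: (-1,0); (-2,0); (1,0); (2,0)]) => //.
    by ring.
  memb ltac:(solve [ring]).
- apply: (@notAP_lin F p hp hc 1 1 [:: (2,0); (1,0); (-2,0); (-1,0)]) => //.
    by ring.
  memb ltac:(solve [ring]).
- apply: (@notAP_lin F p hp hc (2%:R^-1) 2 [:: (0,1); (0,-1); (1,0); (-1,0)]) => //.
    by field.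
  memb ltac:(solve [ring | field; exact: tw]).
- apply: (@notAP_lin F p hp hc (2%:R^-1) 2 [:: (2,0); (1,0); (2,1); (0,1)]) => //.
    by field.
  memb ltac:(solve [ring | field; exact: tw]).
- apply: (@notAP_lin F p hp hc (2%:R^-1) 2 [:: (0,1); (0,-1); (1,0); (-1,0)]) => //.
    by field.
  memb ltac:(solve [ring | field; exact: tw]).
- apply: (@notAP_lin F p hp hc (2%:R^-1 * 2%:R^-1) 4 [:: (1,1); (0,1); (1,0); (0,2)]) => //.
    by field.
  memb ltac:(solve [ring | field; exact: tw]).
Qed.

Variables x y : F.
Hypotheses (hx0 : x != 0) (hx1 : x != 1) (hy0 : y != 0) (hy1 : y != 1).

Let T := Tset x y.
Lemma mf : 1 + x * y \in T. Proof. by rewrite Tmem eqxx. Qed.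
Lemma md : x * y \in T. Proof. by rewrite Tmem eqxx !orbT. Qed.
Lemma ma : 1 \in T. Proof. by rewrite Tmem eqxx !orbT. Qed.
Lemma me : y + x \in T. Proof. by rewrite Tmem eqxx !orbT. Qed.
Lemma mc : y \in T. Proof. by rewrite Tmem eqxx !orbT. Qed.
Lemma mb : x \in T. Proof. by rewrite Tmem eqxx !orbT. Qed.

Lemma hx1' : x - 1 != 0. Proof. by rewrite subr_eq0. Qed.
Lemma hy1' : y - 1 != 0. Proof. by rewrite subr_eq0. Qed.

Lemma nab : 1 != x. Proof. by rewrite eq_sym. Qed.
Lemma nac : 1 != y. Proof. by rewrite eq_sym. Qed.
Lemma naf : 1 != 1 + x * y.
Proof. by apply: (@neq_by _ _ (-(x * y))); [ring | rewrite oppr_eq0 mulf_neq0]. Qed.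
Lemma ndb : x * y != x.
Proof. by apply: (@neq_by _ _ (x * (y - 1))); [ring | rewrite mulf_neq0 // hy1']. Qed.
Lemma ndc : x * y != y.
Proof. by apply: (@neq_by _ _ (y * (x - 1))); [ring | rewrite mulf_neq0 // hx1']. Qed.
Lemma ndf : x * y != 1 + x * y.
Proof. by apply: (@neq_by _ _ (-1)); [ring | rewrite oppr_eq0 oner_eq0]. Qed.
Lemma neb : y + x != x.
Proof. by apply: (@neq_by _ _ (y)); [ring | ]. Qed.
Lemma nec : y + x != y.
Proof. by apply: (@neq_by _ _ (x)); [ring | ]. Qed.
Lemma nef : y + x != 1 + x * y.
Proof.
by apply: (@neq_by _ _ (- ((x - 1) * (y - 1)))); [ring | rewrite oppr_eq0 mulf_neq0 ?hx1' ?hy1'].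
Qed.

Lemma core1 : (4 <= #|T|)%N.
Proof.
case: (boolP ((x * y == 1) && (y + x == 1))) => [/andP[/eqP P1 /eqP P2] | nT1].
  case: (@CA _ _ P1 P2) => bc bf cf.
  exact: (card4 _ _ _ _ _ ma mb mc mf nab nac naf bc bf cf).
case: (boolP ((x == y) && (x == 1 + x * y))) => [/andP[/eqP Q1 /eqP Q2] | nT2].
  case: (@CB _ _ Q1 Q2) => da ea de.
  exact: (card4 _ _ _ _ _ ma md me mb (ltac:(by rewrite eq_sym)) (ltac:(by rewrite eq_sym)) nab de ndb neb).
have [w [wT aw wb wc wf]] : exists w, [/\ w \in T, 1 != w, w != x, w != y & w != 1 + x * y].
  case: (eqVneq (x * y) 1) => [P1|nP1].
    exists (y + x); split; rewrite ?me ?neb ?nec ?nef //.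
    by move: nT1; rewrite P1 eqxx /= eq_sym.
  by exists (x * y); split; rewrite ?md ?ndb ?ndc ?ndf // eq_sym.
have [w' [w'T bw' w'a ww']] : exists w', [/\ w' \in T, x != w', 1 != w' & w != w'].
  case: (eqVneq x y) => [Q1|nQ1].
    exists (1 + x * y); split; rewrite ?mf ?naf //.
    by move: nT2; rewrite Q1 eqxx /=.
  by exists y; split; rewrite ?mc ?nac.
exact: (card4 _ _ _ _ _ ma wT mb w'T aw nab w'a wb ww' bw').
Qed.

Lemma derivC : [\/ x * y = 1, y + x = 1 | x * y = y + x] ->
  [\/ x = y, x = 1 + x * y | y = 1 + x * y] -> inAP3' x /\ inAP3' y.
Proof.
case=> P; case=> Q.
-
  rewrite -Q in P *.
  have hx : x = -1 by apply: m1 => //; lc (x * x - 1); rewrite (dif _ _ _ P).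
  by split; apply: Or32.
-
  have hx : x = 2%:R by lc ((x - (1 + x * y)) + (x * y - 1)); rewrite (dif _ _ _ Q) (dif _ _ _ P) addr0.
  rewrite hx in P; split; first by apply: Or31.
  by apply: Or33; apply: half.
-
  have hy : y = 2%:R by lc ((y - (1 + x * y)) + (x * y - 1)); rewrite (dif _ _ _ Q) (dif _ _ _ P) addr0.
  rewrite hy mulrC in P; split; last by apply: Or31.
  by apply: Or33; apply: half.
-
  rewrite -Q in P *.
  have hx : x = 2%:R^-1 by apply: half; lc (x + x - 1); rewrite (dif _ _ _ P).
  by split; apply: Or33.
-
  have hy : y = 1 - x by lc (y + x - 1); rewrite (dif _ _ _ P).
  rewrite hy in Q.
  have hx : x = -1 by apply: m1 => //; lc (x - (1 + x * (1 - x))); rewrite (dif _ _ _ Q).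
  split; first by apply: Or32.
  by apply: Or31; rewrite hy hx; ring.
-
  have hx : x = 1 - y by lc (y + x - 1); rewrite (dif _ _ _ P).
  rewrite hx in Q.
  have hy : y = -1 by apply: m1 => //; lc (y - (1 + (1 - y) * y)); rewrite (dif _ _ _ Q).
  split; last by apply: Or32.
  by apply: Or31; rewrite hx hy; ring.
-
  rewrite -Q in P *.
  have hx : x = 2%:R by apply: m2 => //; lc (x * x - (x + x)); rewrite (dif _ _ _ P).
  by split; apply: Or31.
-
  have hy : y = -1 by lc (-((x - (1 + x * y)) + (x * y - (y + x)))); rewrite (dif _ _ _ Q) (dif _ _ _ P) addr0 oppr0.
  rewrite hy in P; split; last by apply: Or32.
  by apply: Or33; apply: half; lc (-(x * -1 - (-1 + x))); rewrite (dif _ _ _ P) oppr0.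
-
  have hx : x = -1 by lc (-((y - (1 + x * y)) + (x * y - (y + x)))); rewrite (dif _ _ _ Q) (dif _ _ _ P) addr0 oppr0.
  rewrite hx in P; split; first by apply: Or32.
  by apply: Or33; apply: half; lc (-(-1 * y - (y + -1))); rewrite (dif _ _ _ P) oppr0.
Qed.

Lemma T1pair : ~~ ((x * y == 1) && (y + x == 1)) ->
  exists w, [/\ w \in T, 1 != w, w != x, w != y & w != 1 + x * y].
Proof.
move=> nT1; case: (eqVneq (x * y) 1) => [P1|nP1].
  exists (y + x); split; rewrite ?me ?neb ?nec ?nef //.
  by move: nT1; rewrite P1 eqxx /= eq_sym.
by exists (x * y); split; rewrite ?md ?ndb ?ndc ?ndf // eq_sym.
Qed.

Lemma T2pair : ~~ ((x == y) && (x == 1 + x * y)) ->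
  exists w', [/\ w' \in T, x != w', 1 != w', x * y != w' & y + x != w'].
Proof.
move=> nT2; case: (eqVneq x y) => [Q1|nQ1].
  exists (1 + x * y); split; rewrite ?mf ?naf ?ndf ?nef //.
  by move: nT2; rewrite Q1 eqxx /=.
by exists y; split; rewrite ?mc ?nac ?ndc ?nec.
Qed.

Lemma core2 : (7 < p)%N -> #|T| = 4%N ->
  ~ is_AP T /\ ((inAP3' x /\ inAP3' y) \/ (x * x = x - 1 /\ (y = 1 - x \/ y = x))).
Proof.
move=> h7 h4; have h3T : (3 <= #|T|)%N by rewrite h4.
case: (boolP ((x * y == 1) && (y + x == 1))) => [/andP[/eqP P1 /eqP P2] | nT1].
  have hy : y = 1 - x by lc ((y + x) - 1); rewrite (dif _ _ _ P2).
  rewrite hy in P1.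
  have hr : x * x = x - 1 by lc (-(x * (1 - x) - 1)); rewrite (dif _ _ _ P1) oppr0.
  split; last by right; split => //; left.
  by move: h3T; rewrite /T hy => h3T; apply: caseA.
case: (boolP ((x == y) && (x == 1 + x * y))) => [/andP[/eqP Q1 /eqP Q2] | nT2].
  rewrite -Q1 in Q2.
  have hr : x * x = x - 1 by lc (-(x - (1 + x * x))); rewrite (dif _ _ _ Q2) oppr0.
  split; last by right; split => //; right.
  by move: h3T; rewrite /T -Q1 => h3T; apply: caseB.
have hP : [\/ x * y = 1, y + x = 1 | x * y = y + x].
  case: (eqVneq (x * y) 1) => [?|n1]; first by apply: Or31.
  case: (eqVneq (y + x) 1) => [?|n2]; first by apply: Or32.
  case: (eqVneq (x * y) (y + x)) => [?|n3]; first by apply: Or33.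
  have [w' [w'T bw' aw' dw' ew']] := T2pair nT2.
  have := card5 _ _ _ _ _ _ ma md me mb w'T (ltac:(by rewrite eq_sym)) (ltac:(by rewrite eq_sym))
     nab aw' n3 ndb dw' neb ew' bw'.
  by rewrite h4.
have hQ : [\/ x = y, x = 1 + x * y | y = 1 + x * y].
  case: (eqVneq x y) => [?|n1]; first by apply: Or31.
  case: (eqVneq x (1 + x * y)) => [?|n2]; first by apply: Or32.
  case: (eqVneq y (1 + x * y)) => [?|n3]; first by apply: Or33.
  have [w [wT aw wb wc wf]] := T1pair nT1.
  have := card5 _ _ _ _ _ _ mb mc mf ma wT n1 n2 (ltac:(by rewrite eq_sym nab))
     (ltac:(by rewrite eq_sym)) n3 (ltac:(by rewrite eq_sym nac)) (ltac:(by rewrite eq_sym))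
     (ltac:(by rewrite eq_sym naf)) (ltac:(by rewrite eq_sym)) aw.
  by rewrite h4.
have [ix iy] := derivC hP hQ.
by split; [exact: caseC | left].
Qed.

End Core.
Arguments Tset {F}.

Section Fin.
Variable F : finFieldType.

Lemma card3 (a b c : F) : a != b -> a != c -> b != c -> #|[set a; b; c]| = 3%N.
Proof.
move=> ab ac bc; rewrite -setUA !cardsU1 cards1 !inE (negbTE ab) (negbTE ac) (negbTE bc) //.
Qed.

Lemma aff3 (al be a b c : F) :
  affine_image al be [set a; b; c] = [set al * a + be; al * b + be; al * c + be].
Proof. by rewrite /affine_image !imsetU !imset_set1. Qed.

Lemma perm3 (a b c : F) : [set a; b; c] = [set b; c; a].
Proof. by apply/setP => z; rewrite !inE; do 3 case: (z == _). Qed.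

Lemma perm3' (a b c : F) : [set a; b; c] = [set c; a; b].
Proof. by apply/setP => z; rewrite !inE; do 3 case: (z == _). Qed.

Lemma swap3 (a b c : F) : [set a; b; c] = [set b; a; c].
Proof. by apply/setP => z; rewrite !inE; do 3 case: (z == _). Qed.

Lemma AP3set (a d : F) (A : {set F}) : #|A| = 3%N ->
  A = [set a; a + d; a + 2%:R * d] -> d != 0 -> is_AP A.
Proof.
move=> h3 hA hd; exists a, d; split => //.
rewrite h3 set3 /= {1}hA; congr ([set _; _; _]); ring.
Qed.

End Fin.

Lemma AP013 (F : finFieldType) (p : nat) (hc : p \in [pchar F]) (h3 : (3 < p)%N) (x : F) :
  inAP3' F x -> x != 0 -> x != 1 -> is_AP [set 0; 1; x].
Proof.
have tw := @two_neq0 F p hc h3.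
move=> hx hx0 hx1.
have c3 : #|[set 0; 1; x]| = 3%N by apply: card3; rewrite eq_sym // oner_neq0.
case: hx => hx.
- apply: (@AP3set F (0) (1)) => //; last exact: oner_neq0.
  by rewrite hx; congr ([set _; _; _]); ring.
- apply: (@AP3set F (-1) (1)) => //; last exact: oner_neq0.
  by rewrite perm3' hx; congr ([set _; _; _]); ring.
- apply: (@AP3set F (0) (x)) => //.
  rewrite perm3' swap3; congr ([set _; _; _]); try ring.
  by rewrite hx; field.
Qed.

Lemma root_ne (F : finFieldType) (p : nat) (hc : p \in [pchar F]) (h3 : (3 < p)%N) (x : F) :
  x * x = x - 1 -> x != 1 - x.
Proof.
move=> hr.
have h1 : x * (1 - x) = 1 by ring: hr.
have h2 : (1 - x) + x = 1 by ring.
by case: (@CA F p hc h3 x (1 - x) h1 h2).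
Qed.

Theorem lemma2p5 (p : nat) (hp : prime p) (hp3 : (3 < p)%N)
  (u v : 'I_3 -> 'F_p) (hu : injective u) (hv : injective v) :
  (4 <= #|prodset u v|)%N /\
  ((7 < p)%N -> #|prodset u v| = 4%N ->
     ~ is_AP (prodset u v) /\
     ((is_AP [set u i | i : 'I_3] /\ is_AP [set v i | i : 'I_3]) \/
      exists (x y alpha beta gamma delta : 'F_p),
        x != y /\ x ^+ 2 - x + 1 = 0 /\ y ^+ 2 - y + 1 = 0 /\
        alpha != 0 /\ gamma != 0 /\
        affine_image alpha beta [set u i | i : 'I_3] = [set 0; 1; x] /\
        affine_image gamma delta [set v i | i : 'I_3] = [set 0; 1; y])).
Proof.
have hc : p \in [pchar 'F_p] := pchar_Fp hp.
have neq (w : 'I_3 -> 'F_p) (hw : injective w) (i j : 'I_3) : i != j -> w i - w j != 0.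
  by move=> hij; rewrite subr_eq0 (inj_eq hw).
have ha : u o1 - u o0 != 0 by apply: neq.
have hb : v o1 - v o0 != 0 by apply: neq.
set al := u o1 - u o0; set be := v o1 - v o0.
set x := (u o2 - u o0) / al; set y := (v o2 - v o0) / be.
set t := fun i => (u i - u o0) / al; set s := fun i => (v i - v o0) / be.
have hut : u =1 (fun i => al * t i + u o0) by move=> i; rewrite /t; field.
have hvs : v =1 (fun i => be * s i + v o0) by move=> i; rewrite /s; field.
have [c [K [hc0 hPS]]] : exists c K, c != 0 /\ prodset u v = affine_image c K (Tset x y).
  exists (al * be), (al * (v o0 * \sum_i t i) + u o0 * \sum_i (be * s i + v o0)).
  split; first by rewrite mulf_neq0.
  rewrite (@prodset_ext _ _ _ _ _ hut hvs) prodset_affl prodset_affr affine_comp prodsetE.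
  have -> : t o0 = 0 by rewrite /t subrr mul0r.
  have -> : t o1 = 1 by rewrite /t divff.
  have -> : s o0 = 0 by rewrite /s subrr mul0r.
  have -> : s o1 = 1 by rewrite /s divff.
  by [].
have hx0 : x != 0 by rewrite mulf_neq0 ?invr_neq0 // neq.
have hy0 : y != 0 by rewrite mulf_neq0 ?invr_neq0 // neq.
have hx1 : x != 1.
  apply/eqP => h; have : u o2 = u o1 by rewrite hut (hut o1) /t -/x h divff.
  by move/hu.
have hy1 : y != 1.
  apply/eqP => h; have : v o2 = v o1 by rewrite hvs (hvs o1) /s -/y h divff.
  by move/hv.
have hcard : #|prodset u v| = #|Tset x y| by rewrite hPS card_affine.
split; first by rewrite hcard; exact: (@core1 _ p hc hp3 x y hx0 hx1 hy0 hy1).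
move=> h7 h4; rewrite hcard in h4.
have [nAP alt] := @core2 _ p hp hc hp3 x y hx0 hx1 hy0 hy1 h7 h4.
split; first by rewrite hPS => /(@AP_aff_inv _ _ _ _ hc0).
have hU : [set u i | i : 'I_3] = affine_image al (u o0) [set 0; 1; x].
  rewrite set3 aff3; congr ([set _; _; _]).
  - by ring.
  - by rewrite /al; ring.
  - by rewrite /x; field.
have hV : [set v i | i : 'I_3] = affine_image be (v o0) [set 0; 1; y].
  rewrite set3 aff3; congr ([set _; _; _]).
  - by ring.
  - by rewrite /be; ring.
  - by rewrite /y; field.
case: alt => [[ix iy] | [hr hy']].
  left; split.
    by rewrite hU; apply: AP_aff => //; apply: (@AP013 _ p hc hp3).
  by rewrite hV; apply: AP_aff => //; apply: (@AP013 _ p hc hp3).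
right.
have hxx : x ^+ 2 - x + 1 = 0 by rewrite expr2 hr; ring.
have hUx : affine_image al^-1 (- (al^-1 * u o0)) [set u i | i : 'I_3] = [set 0; 1; x].
  rewrite hU affine_comp mulVf // (_ : _ + _ = 0) ?affine_id //; ring.
case: hy' => hy'.
  exists x, y, al^-1, (- (al^-1 * u o0)), be^-1, (- (be^-1 * v o0)).
  split; first by rewrite hy'; apply: (@root_ne _ p hc hp3).
  split => //; split; first by rewrite hy' expr2; ring: hr.
  split; first by rewrite invr_neq0.
  split; first by rewrite invr_neq0.
  split => //.
  rewrite hV affine_comp mulVf // (_ : _ + _ = 0) ?affine_id //; ring.
exists x, (1 - x), al^-1, (- (al^-1 * u o0)), (- be^-1), (1 + be^-1 * v o0).
split; first by apply: (@root_ne _ p hc hp3).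
split => //; split; first by rewrite expr2; ring: hr.
split; first by rewrite invr_neq0.
split; first by rewrite oppr_eq0 invr_neq0.
split => //.
rewrite hV affine_comp (_ : - be^-1 * be = -1); last by rewrite mulNr mulVf.
rewrite (_ : - be^-1 * v o0 + (1 + be^-1 * v o0) = 1); last by ring.
rewrite aff3 hy' swap3; congr ([set _; _; _]); ring.
Qed.
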